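(* Let $R\subseteq S$ be as in the context, let $n=n_1+\cdots+n_\ell$, and let $\mathcal{C}\subseteq S^n$ be any code (linear or not) such that $k=\log_{|S|}|\mathcal{C}|$ is a positive integer. Then $\mathcal{C}$ is MSRD over $R$ for the length partition $n=n_1+\cdots+n_\ell$ if and only if, for all invertible matrices $A_i\in R^{n_i\times n_i}$ ($i=1,\ldots,\ell$), the code $\mathcal{C}\,{\rm Diag}(A_1,\ldots,A_\ell)=\{\mathbf{c}\,{\rm Diag}(A_1,\ldots,A_\ell):\mathbf{c}\in\mathcal{C}\}$ is MDS.
   Context: $R$ is a finite commutative chain ring with maximal ideal $\mathfrak{m}$; $S=R[x]/(h)$ with $h\in R[x]$ monic of degree $m$ irreducible modulo $\mathfrak{m}$, a free $R$-module of rank $m$. Rank: for $\mathbf{u}\in S^s$, fix an $R$-basis $\alpha_1,\ldots,\alpha_m$ of $S$ and write $\mathbf{u}=\sum_{i=1}^m\alpha_i(c_{i,1},\ldots,c_{i,s})$ with $c_{i,j}\in R$; ${\rm rk}(\mathbf{u})$ is the number of nonzero diagonal entries in the Smith normal form of $(c_{i,j})\in R^{m\times s}$. For $\mathbf{c}=(\mathbf{c}^{(1)},\ldots,\mathbf{c}^{(\ell)})\in S^n$ with $\mathbf{c}^{(i)}\in S^{n_i}$, ${\rm wt}_{SR}(\mathbf{c})=\sum_i{\rm rk}(\mathbf{c}^{(i)})$ and ${\rm d}_{SR}(\mathcal{C})$ is the minimum of ${\rm wt}_{SR}(\mathbf{c}-\mathbf{d})$ over distinct $\mathbf{c},\mathbf{d}\in\mathcal{C}$.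 $\mathcal{C}$ is MSRD if $k$ is a positive integer and ${\rm d}_{SR}(\mathcal{C})=n-k+1$. A code $\mathcal{D}\subseteq S^n$ with $\log_{|S|}|\mathcal{D}|=k$ is MDS if its minimum Hamming distance equals $n-k+1$. *)

(* Defs.v *)
From HB Require Import structures.
From mathcomp Require Import all_boot all_order all_algebra.
Set Implicit Arguments. Unset Strict Implicit. Unset Printing Implicit Defensive.
Import Order.TTheory GRing.Theory Num.Theory.
Local Open Scope ring_scope.

Section Defs.
Variable R : finComUnitRingType.

Definition is_ideal (I : {set R}) : bool :=
  [&& (0 : R) \in I,
      [forall x, forall y, (x \in I) ==> (y \in I) ==> (x + y \in I)] &
      [forall a, forall x, (x \in I) ==> (a * x \in I)]].

Definition chain_ring : Prop :=
  forall I J : {set R}, is_ideal I -> is_ideal J -> (I \subset J) \/ (J \subset I).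

(* The maximal ideal of the (local) chain ring R: its non-units. *)
Definition maxideal : {set R} := [set x : R | x \notin GRing.unit].

(* h is irreducible modulo the maximal ideal: the reduction of h in
   (R/m)[x] has degree >= 1 and admits no factorisation into two
   non-constant factors (written out via lifts to R[x]). *)
Definition irreducible_mod_max (h : {poly R}) : Prop :=
  (1 < size h)%N /\
  ~ exists f g : {poly R},
      [exists i : 'I_(size f), (0 < val i)%N && (f`_i \notin maxideal)] /\
      [exists i : 'I_(size g), (0 < val i)%N && (g`_i \notin maxideal)] /\
      forall i, (h - f * g)`_i \in maxideal.

(* S = R[x]/(h), with m = deg h, is represented by coordinate vectors in
   R^m with respect to the R-basis 1, x, ..., x^(m-1). *)
Definition Selt (m : nat) := 'rV[R]_m.

Definition dvdR (a b : R) : bool := [exists c : R, b == c * a].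

Definition is_snf m s (D : 'M[R]_(m, s)) : bool :=
  [forall i : 'I_m, forall j : 'I_s, (val i != val j) ==> (D i j == 0)] &&
  [forall i : 'I_m, forall j : 'I_s, forall i' : 'I_m, forall j' : 'I_s,
     [&& val i == val j, val i' == val j' & val i' == (val i).+1] ==>
       dvdR (D i j) (D i' j')].

Definition n_nonzero_diag m s (D : 'M[R]_(m, s)) : nat :=
  #|[set i : 'I_m | [exists j : 'I_s, (val i == val j) && (D i j != 0)]]|.

Definition snf_with_rank m s (M : 'M[R]_(m, s)) (r : nat) : bool :=
  [exists P : 'M[R]_m, exists Q : 'M[R]_s,
     [&& P \in unitmx, Q \in unitmx, is_snf (P *m M *m Q) &
         n_nonzero_diag (P *m M *m Q) == r]].

(* number of nonzero diagonal entries of the Smith normal form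
   (well defined: first r for which an SNF with r nonzero entries exists) *)
Definition snf_rank m s (M : 'M[R]_(m, s)) : nat :=
  find (snf_with_rank M) (iota 0 (minn m s).+1).

Definition coord_mx m s (u : 'rV[Selt m]_s) : 'M[R]_(m, s) :=
  \matrix_(i < m, j < s) (u 0 j) 0 i.

Definition rk m s (u : 'rV[Selt m]_s) : nat := snf_rank (coord_mx u).

Definition wt_SR m l (ns : 'I_l -> nat) (c : 'rV[Selt m]_(\sum_i ns i)) : nat :=
  (\sum_(i < l) rk (submxrow (q_ := ns) c i))%N.

Definition wt_H m n (c : 'rV[Selt m]_n) : nat := #|[set j : 'I_n | c 0 j != 0]|.

(* minimum distance of a code w.r.t. a weight (n.+1 if fewer than 2 words) *)
Definition min_dist m n (wt : 'rV[Selt m]_n -> nat) (C : {set 'rV[Selt m]_n}) : nat :=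
  \big[minn/n.+1]_(c in C) \big[minn/n.+1]_(d in C | d != c) wt (c - d).

Definition d_SR m l (ns : 'I_l -> nat) (C : {set 'rV[Selt m]_(\sum_i ns i)}) :=
  min_dist (@wt_SR m l ns) C.

Definition d_H m n (C : {set 'rV[Selt m]_n}) := min_dist (@wt_H m n) C.

Definition MSRD m l (ns : 'I_l -> nat) (C : {set 'rV[Selt m]_(\sum_i ns i)}) : Prop :=
  exists k : nat, (0 < k)%N /\ #|C| = (#|{: Selt m}| ^ k)%N /\
    (d_SR C + k = (\sum_i ns i).+1)%N.

Definition MDS m n (D : {set 'rV[Selt m]_n}) : Prop :=
  exists k : nat, #|D| = (#|{: Selt m}| ^ k)%N /\ (d_H D + k = n.+1)%N.

Definition act_mx m n (c : 'rV[Selt m]_n) (A : 'M[R]_n) : 'rV[Selt m]_n :=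
  \row_j \sum_i A i j *: c 0 i.

Definition code_diag m l (ns : 'I_l -> nat) (C : {set 'rV[Selt m]_(\sum_i ns i)})
    (A : forall i, 'M[R]_(ns i)) : {set 'rV[Selt m]_(\sum_i ns i)} :=
  [set act_mx c (mxdiag A) | c in C].

End Defs.

(* Main.v *)
Require Import Defs.
From HB Require Import structures.
From mathcomp Require Import all_boot all_order all_algebra perm zify.
Import Order.TTheory GRing.Theory Num.Theory.
Set Implicit Arguments. Unset Strict Implicit. Unset Printing Implicit Defensive.
Local Open Scope ring_scope.

Section SNF.
Variable R : finComUnitRingType.
Hypothesis chainR : chain_ring R.

Lemma dvdRP (a b : R) : reflect (exists c, b = c * a) (dvdR a b).
Proof.
apply: (iffP existsP) => [[c /eqP ->]|[c ->]]; by exists c.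
Qed.

Lemma dvdRR (a : R) : dvdR a a.
Proof. by apply/dvdRP; exists 1; rewrite mul1r. Qed.

Lemma dvdR0 (a : R) : dvdR a 0.
Proof. by apply/dvdRP; exists 0; rewrite mul0r. Qed.

Lemma dvdRD (a x y : R) : dvdR a x -> dvdR a y -> dvdR a (x + y).
Proof.
by move=> /dvdRP[c ->] /dvdRP[d ->]; apply/dvdRP; exists (c + d); rewrite mulrDl.
Qed.

Lemma dvdRN (a x : R) : dvdR a x -> dvdR a (- x).
Proof. by move=> /dvdRP[c ->]; apply/dvdRP; exists (- c); rewrite mulNr. Qed.

Lemma dvdRMl (a x y : R) : dvdR a x -> dvdR a (y * x).
Proof. by move=> /dvdRP[c ->]; apply/dvdRP; exists (y * c); rewrite mulrA. Qed.

Lemma dvdRMr (a x y : R) : dvdR a x -> dvdR a (x * y).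
Proof. by rewrite mulrC; apply: dvdRMl. Qed.

Lemma dvdR_trans (a b c : R) : dvdR a b -> dvdR b c -> dvdR a c.
Proof.
by move=> /dvdRP[u ->] /dvdRP[v ->]; apply/dvdRP; exists (v * u); rewrite mulrA.
Qed.

Lemma dvdR_sum (I : finType) (a : R) (F : I -> R) :
  (forall i, dvdR a (F i)) -> dvdR a (\sum_i F i).
Proof.
move=> H; apply: (big_ind (dvdR a)) => //; [exact: dvdR0 | exact: dvdRD].
Qed.

Definition idl (a : R) : {set R} := [set x | dvdR a x].

Lemma idl_ideal a : is_ideal (idl a).
Proof.
apply/and3P; split.
- by rewrite inE dvdR0.
- by apply/forallP => x; apply/forallP => y; rewrite !inE; apply/implyP => hx;
    apply/implyP => hy; apply: dvdRD.
- by apply/forallP => c; apply/forallP => x; rewrite !inE; apply/implyP; apply: dvdRMl.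
Qed.

Lemma dvdR_total (a b : R) : dvdR a b \/ dvdR b a.
Proof.
case: (chainR (idl_ideal a) (idl_ideal b)) => /subsetP H.
- by right; have := H a; rewrite !inE dvdRR; apply.
- by left; have := H b; rewrite !inE dvdRR; apply.
Qed.

Lemma pivot_ex m s (M : 'M[R]_(m, s)) i0 j0 : M i0 j0 != 0 ->
  exists i, exists j, M i j != 0 /\ forall i' j', dvdR (M i j) (M i' j').
Proof.
move=> nz.
pose F (p : 'I_m * 'I_s) := #|idl (M p.1 p.2)|.
have [[i j] _ Hmin] := @arg_maxnP _ (i0, j0) xpredT F isT.
have Hd : forall i' j', dvdR (M i j) (M i' j').
  move=> i' j'; case: (dvdR_total (M i j) (M i' j')) => // Hb.
  have sub : idl (M i j) \subset idl (M i' j').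
    by apply/subsetP => x; rewrite !inE; apply: dvdR_trans.
  have := Hmin (i', j') isT; rewrite /F /=.
  have [_ E] := subset_leqif_card sub.
  move=> Hle; have : #|idl (M i j)| == #|idl (M i' j')| by rewrite eqn_leq Hle (subset_leq_card sub).
  rewrite E => /subsetP /(_ (M i' j')); rewrite !inE dvdRR; apply => //.
exists i, j; split => //.
apply: contraNneq nz => H0; have := Hd i0 j0; rewrite H0.
by case/dvdRP => c ->; rewrite mulr0.
Qed.


Definition ncols m s (M : 'M[R]_(m, s)) : nat :=
  #|[set j : 'I_s | [exists i, M i j != 0]]|.

Definition snf_good m s (M : 'M[R]_(m, s)) : Prop :=
  exists P, exists Q, [/\ P \in unitmx, Q \in unitmx, is_snf (P *m M *m Q) &
    (n_nonzero_diag (P *m M *m Q) <= ncols M)%N].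

Lemma snf_zero m s (M : 'M[R]_(m, s)) : (forall i j, M i j = 0) -> snf_good M.
Proof.
move=> H; exists 1%:M, 1%:M; rewrite mul1mx mulmx1 !unitmx1; split => //.
- apply/andP; split; apply/forallP => i; apply/forallP => j.
    by rewrite H eqxx implybT.
  apply/forallP => i'; apply/forallP => j'; rewrite !H; apply/implyP => _.
  exact: dvdR0.
- rewrite /n_nonzero_diag (_ : [set _ | _] = set0) ?cards0 //.
  apply/setP => i; rewrite !inE; apply/existsP => -[j]; by rewrite H eqxx andbF.
Qed.

Lemma ordD1 m (i : 'I_(1 + m)) : i = lshift m ord0 \/ exists i', i = rshift 1 i'.
Proof.
case: (splitP i) => [j Hj|k Hk]; [left|right; exists k]; apply/val_inj => //=.
by rewrite Hj (ord1 j).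
Qed.

Lemma is_snf_block m s (a : R) (D : 'M[R]_(m, s)) : is_snf D ->
  (forall i j, dvdR a (D i j)) -> is_snf (block_mx a%:M 0 0 D : 'M_(1 + m, 1 + s)).
Proof.
move=> /andP[/forallP H1 /forallP H2] Ha; apply/andP; split.
  apply/forallP => i; apply/forallP => j.
  case: (ordD1 i) => [->|[i' ->]]; case: (ordD1 j) => [->|[j' ->]];
    rewrite ?block_mxEul ?block_mxEur ?block_mxEdl ?block_mxEdr ?mxE ?eqxx ?implybT //=.
  have := H1 i'; move/forallP/(_ j'); by rewrite eqSS.
apply/forallP => i; apply/forallP => j; apply/forallP => i'; apply/forallP => j'.
case: (ordD1 i) => [->|[i1 ->]]; case: (ordD1 j) => [->|[j1 ->]];
case: (ordD1 i') => [->|[i2 ->]]; case: (ordD1 j') => [->|[j2 ->]];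
  rewrite ?block_mxEul ?block_mxEur ?block_mxEdl ?block_mxEdr /= ?andbF //.
- by apply/implyP => _; rewrite mxE eqxx mulr1n.
- rewrite !eqSS; apply/implyP => /and3P[e1 e2 e3].
  have := H2 i1; move/forallP/(_ j1)/forallP/(_ i2)/forallP/(_ j2).
  by rewrite e1 e2 e3.
Qed.


Lemma nnd_block m s (a : R) (D : 'M[R]_(m, s)) :
  (n_nonzero_diag (block_mx a%:M 0 0 D : 'M_(1 + m, 1 + s)) <= 1 + n_nonzero_diag D)%N.
Proof.
rewrite /n_nonzero_diag.
set SD := [set i : 'I_m | _].
set S := [set i : 'I_(1 + m) | _].
have sub : S \subset lshift m ord0 |: [set rshift 1 x | x in SD].
  apply/subsetP => i; rewrite !inE => /existsP[j /andP[eij nz]].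
  case: (ordD1 i) => [->|[i' Ei]]; first by rewrite eqxx.
  subst i; apply/orP; right; apply/imsetP; exists i' => //.
  rewrite inE; apply/existsP.
  case: (ordD1 j) eij nz => [->|[j' ->]] /=; first by [].
  rewrite block_mxEdr eqSS => e nz; by exists j'; rewrite e.
apply: (leq_trans (subset_leq_card sub)); rewrite cardsU1.
apply: leq_add; first by case: (_ \notin _).
exact: leq_imset_card.
Qed.

Lemma snf_ex m s (M : 'M[R]_(m, s)) : snf_good M.
Proof.
elim: m s M => [|m IH] s M.
  by apply: snf_zero => -[].
case: (pickP (fun p : 'I_m.+1 * 'I_s => M p.1 p.2 != 0)) => [[i0 j0] /= nz | z]; last first.
  by apply: snf_zero => i j; have := z (i, j) => /= /negbFE/eqP.
revert M i0 j0 nz; case: s => [|s] M i0 j0 nz; first by move: j0 nz => [[]].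
have [i1 [j1 [nz1 Hd]]] := pivot_ex nz.
pose M1 : 'M[R]_(1 + m, 1 + s) := xrow i1 0 (xcol j1 0 M).
have M1E : forall i j, M1 i j = M (tperm i1 0 i) (tperm j1 0 j).
  by move=> i j; rewrite !mxE.
pose a := M1 0 0.
have aE : a = M i1 j1 by rewrite /a M1E !tpermR.
have Ha : forall i j, dvdR a (M1 i j) by move=> i j; rewrite aE M1E.
have Hcols : (ncols M1 <= ncols M)%N.
  rewrite /ncols -(card_preimset _ (@perm_inj _ (tperm j1 0))).
  apply: subset_leq_card; apply/subsetP => j; rewrite !inE => /existsP[i].
  by rewrite M1E => nzM; apply/existsP; exists (tperm i1 0 i).
pose ul := ulsubmx M1; pose r := ursubmx M1; pose c := dlsubmx M1; pose B0 := drsubmx M1.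
have l0 : forall k, lshift k (ord0 : 'I_1) = ord0 :> 'I_(1 + k) by move=> k; apply/val_inj.
have ulE : ul = a%:M.
  rewrite [ul]mx11_scalar /ul mxE.
  by congr (_%:M); rewrite mxE; congr (M1 _ _); apply/val_inj.
pose q x := odflt 0 [pick y | x == y * a].
have qP : forall x, dvdR a x -> x = q x * a.
  move=> x /dvdRP[y Ey]; rewrite /q; case: pickP => [z /eqP //|H].
  by have := H y; rewrite Ey eqxx.
pose c' : 'M[R]_(m, 1) := \matrix_(i, j) q (c i j).
pose r' : 'M[R]_(1, s) := \matrix_(i, j) q (r i j).
have Hc : c = c' *m ul.
  apply/matrixP => i j; rewrite ulE mul_mx_scalar !mxE mulrC -qP //.
  by rewrite -M1E.
have Hr : r = ul *m r'.
  apply/matrixP => i j; rewrite ulE mul_scalar_mx !mxE mulrC -qP //.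
  by rewrite -M1E.
pose L : 'M[R]_(1 + m) := block_mx 1%:M 0 (- c') 1%:M.
pose U : 'M[R]_(1 + s) := block_mx 1%:M (- r') 0 1%:M.
pose B := B0 - c' *m r.
have HLU : L *m M1 *m U = block_mx ul 0 0 B.
  rewrite -[M1]submxK -/ul -/r -/c -/B0 /L /U !mulmx_block.
  rewrite !mul1mx !mul0mx !mulmx0 !mulmx1 ?addr0 ?add0r.
  rewrite mulNmx -Hc addNr mul0mx add0r mulmxN -Hr addNr mulNmx addrC.
  done.
have HB : forall i j, dvdR a (B i j).
  move=> i j; rewrite !mxE; apply: dvdRD; first by rewrite -M1E.
  apply: dvdRN; apply: dvdR_sum => k; apply: dvdRMl.
  by move: (Ha (lshift m k) (rshift 1 j)); rewrite !mxE.
have [P' [Q' [uP' uQ' snfD' cntD']]] := IH _ B.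
pose D' := P' *m B *m Q'.
have HD' : forall i j, dvdR a (D' i j).
  move=> i j; rewrite mxE; apply: dvdR_sum => k; apply: dvdRMr.
  rewrite mxE; apply: dvdR_sum => l; apply: dvdRMl; exact: HB.
pose b1 : 'M[R]_(1 + m) := block_mx 1%:M 0 0 P'.
pose b2 : 'M[R]_(1 + s) := block_mx 1%:M 0 0 Q'.
exists (b1 *m L *m tperm_mx i1 0), (tperm_mx j1 0 *m U *m b2).
have E : b1 *m L *m tperm_mx i1 0 *m M *m (tperm_mx j1 0 *m U *m b2) =
   block_mx a%:M 0 0 D'.
  have -> : b1 *m L *m tperm_mx i1 0 *m M *m (tperm_mx j1 0 *m U *m b2) =
     b1 *m (L *m M1 *m U) *m b2 by rewrite /M1 xrowE xcolE !mulmxA.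
  rewrite HLU /b1 /b2 !mulmx_block !mul1mx !mul0mx !mulmx0 !mulmx1 !addr0 !add0r.
  by rewrite ulE mul0mx.
have ub1 : b1 \in unitmx by rewrite unitmxE det_ublock det1 mul1r -unitmxE.
have ub2 : b2 \in unitmx by rewrite unitmxE det_ublock det1 mul1r -unitmxE.
have uL : L \in unitmx by rewrite unitmxE det_lblock !det1 mul1r unitr1.
have uU : U \in unitmx by rewrite unitmxE det_ublock !det1 mul1r unitr1.
rewrite E; split.
- by rewrite !unitmx_mul ub1 uL unitmx_perm.
- by rewrite !unitmx_mul ub2 uU unitmx_perm.
- exact: is_snf_block.
apply: (leq_trans (nnd_block _ _)); apply: (leq_trans _ Hcols).
apply: (@leq_trans (1 + ncols B)); first by rewrite leq_add2l.
rewrite /ncols.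
set SB := [set j : 'I_s | _].
have sub : lshift s ord0 |: [set rshift 1 x | x in SB] \subset
   [set j : 'I_(1 + s) | [exists i, M1 i j != 0]].
  apply/subsetP => j; rewrite !inE => /orP[/eqP ->|/imsetP[j' Hj' ->]].
    by apply/existsP; exists ord0; rewrite l0 -/a aE.
  move: Hj'; rewrite inE => /existsP[i nzB].
  apply: contraT; rewrite negb_exists => /forallP H0.
  have h1 := H0 (rshift 1 i); have h2 := H0 (lshift m ord0); rewrite !negbK in h1 h2.
  move: nzB h1 h2; rewrite !mxE big_ord1 !mxE => nzB /eqP h1 /eqP h2.
  by move: nzB; rewrite h1 h2 mulr0 subr0 eqxx.
apply: (leq_trans _ (subset_leq_card sub)); rewrite cardsU1 card_imset; last exact: rshift_inj.
rewrite leq_add2r; case: imsetP => // -[x _ /(congr1 val)] //.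
Qed.


Lemma snf_with_rank_mulr m s (M : 'M[R]_(m, s)) A r : A \in unitmx ->
  snf_with_rank (M *m A) r = snf_with_rank M r.
Proof.
move=> uA; apply/existsP/existsP => -[P /existsP[Q /and4P[uP uQ sn nn]]].
  exists P; apply/existsP; exists (A *m Q).
  by rewrite unitmx_mul uA uQ uP /= !mulmxA -(mulmxA P) sn nn.
exists P; apply/existsP; exists (invmx A *m Q).
rewrite unitmx_mul unitmx_inv uA uQ uP /=.
by rewrite !mulmxA (mulmxK uA) sn nn.
Qed.

Lemma snf_rank_mulr m s (M : 'M[R]_(m, s)) A : A \in unitmx ->
  snf_rank (M *m A) = snf_rank M.
Proof.
move=> uA; rewrite /snf_rank; apply: eq_find => r; exact: snf_with_rank_mulr.
Qed.

Lemma ncols_le m s (M : 'M[R]_(m, s)) : (ncols M <= s)%N.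
Proof. by rewrite /ncols; apply: leq_trans (max_card _) _; rewrite card_ord. Qed.

Lemma nnd_le m s (D : 'M[R]_(m, s)) : (n_nonzero_diag D <= m)%N.
Proof. by rewrite /n_nonzero_diag; apply: leq_trans (max_card _) _; rewrite card_ord. Qed.

Lemma snf_with_rank_ex m s (M : 'M[R]_(m, s)) :
  exists r, [/\ snf_with_rank M r, (r <= ncols M)%N & (r <= minn m s)%N].
Proof.
have [P [Q [uP uQ sn nn]]] := snf_ex M.
exists (n_nonzero_diag (P *m M *m Q)); split => //.
  by apply/existsP; exists P; apply/existsP; exists Q; rewrite uP uQ sn eqxx.
by rewrite leq_min nnd_le (leq_trans nn (ncols_le _)).
Qed.

Lemma snf_rank_le m s (M : 'M[R]_(m, s)) : (snf_rank M <= ncols M)%N.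
Proof.
have [r [Hr Hc Hm]] := snf_with_rank_ex M.
apply: leq_trans Hc; rewrite /snf_rank; rewrite leqNgt; apply/negP => lt.
have := before_find 0%N lt; rewrite nth_iota ?add0n ?Hr //; by rewrite ltnS.
Qed.

Lemma snf_rank_spec m s (M : 'M[R]_(m, s)) : snf_with_rank M (snf_rank M).
Proof.
have [r [Hr Hc Hm]] := snf_with_rank_ex M.
have hs : has (snf_with_rank M) (iota 0 (minn m s).+1).
  by apply/hasP; exists r => //; rewrite mem_iota add0n ltnS Hm.
have hf : (find (snf_with_rank M) (iota 0 (minn m s).+1) < (minn m s).+1)%N.
  by move: hs; rewrite has_find size_iota.
by have := nth_find 0%N hs; rewrite nth_iota // add0n.
Qed.

Lemma ncols_mull m n s (X : 'M[R]_(m, n)) (Y : 'M[R]_(n, s)) :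
  (ncols (X *m Y) <= ncols Y)%N.
Proof.
apply: subset_leq_card; apply/subsetP => j; rewrite !inE => /existsP[i nz].
apply: contraT; rewrite negb_exists => /forallP H0; move: nz; rewrite mxE big1 ?eqxx //.
by move=> k _; have := H0 k; rewrite negbK => /eqP ->; rewrite mulr0.
Qed.

Lemma ncols_snf m s (D : 'M[R]_(m, s)) : is_snf D -> (ncols D <= n_nonzero_diag D)%N.
Proof.
move=> /andP[/forallP H1 _]; rewrite /ncols /n_nonzero_diag !cardE.
rewrite -(size_map val (enum [set j | _])) -(size_map val (enum [set i | _])).
apply: uniq_leq_size; first by rewrite map_inj_uniq ?enum_uniq //; exact: val_inj.
move=> x /mapP[j]; rewrite mem_enum inE => /existsP[i nz] ->.
have e : val i == val j.
  apply: contraT => ne; have := H1 i; move/forallP/(_ j).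
  by rewrite ne /= (negPf nz).
have -> : val j = val i by rewrite (eqP e).
apply: map_f; rewrite mem_enum inE; apply/existsP; exists j; by rewrite e nz.
Qed.

Lemma rank_K1 m s (M : 'M[R]_(m, s)) A : A \in unitmx ->
  (snf_rank M <= ncols (M *m A))%N.
Proof. by move=> uA; rewrite -(snf_rank_mulr M uA); apply: snf_rank_le. Qed.

Lemma rank_K2 m s (M : 'M[R]_(m, s)) :
  exists A, A \in unitmx /\ (ncols (M *m A) <= snf_rank M)%N.
Proof.
have /existsP[P /existsP[Q /and4P[uP uQ sn /eqP nn]]] := snf_rank_spec M.
exists Q; split => //; rewrite -nn.
apply: leq_trans (ncols_snf sn).
have -> : M *m Q = invmx P *m (P *m M *m Q) by rewrite -!mulmxA mulKmx.
exact: ncols_mull.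
Qed.


Lemma card_setE (T : finType) (P : pred T) : #|[set t | P t]| = (\sum_t (P t : nat))%N.
Proof.
rewrite -sum1_card big_mkcond /=; apply: eq_bigr => t _; rewrite inE; by case: (P t).
Qed.

Lemma sum_blocks l (ns : 'I_l -> nat) (G : 'I_(\sum_i ns i) -> nat) :
  (\sum_t G t = \sum_i \sum_(j : 'I_(ns i)) G (tagnat.Rank i j))%N.
Proof.
rewrite sig_big_dep /= (reindex _ tagnat.rank_bij_on) /=.
by apply: eq_bigr => -[i j] _; rewrite tagnat.rankE.
Qed.

Lemma ncols_sum m l (ns : 'I_l -> nat) (X : 'M[R]_(m, \sum_i ns i)) :
  ncols X = (\sum_i ncols (submxrow X i))%N.
Proof.
rewrite /ncols card_setE sum_blocks; apply: eq_bigr => i _.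
rewrite card_setE; apply: eq_bigr => j _; congr (nat_of_bool _).
by apply: eq_existsb => r; rewrite !mxE.
Qed.

Lemma submxrow_mul_diag m l (ns : 'I_l -> nat) (X : 'M[R]_(m, \sum_i ns i))
   (A : forall i, 'M[R]_(ns i)) i :
  submxrow (X *m mxdiag A) i = submxrow X i *m A i.
Proof. by rewrite -{1}[X]submxrowK mul_mxrow_mxdiag mxrowK. Qed.

Lemma coord_actE m s (c : 'rV[Selt R m]_s) (A : 'M[R]_s) :
  coord_mx (act_mx c A) = coord_mx c *m A.
Proof.
apply/matrixP => i j; rewrite !mxE summxE; apply: eq_bigr => k _.
by rewrite !mxE mulrC.
Qed.

Lemma coord_inj m s : injective (@coord_mx R m s).
Proof.
move=> c d /matrixP E; apply/matrixP => i j; rewrite (ord1 i).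
apply/rowP => k; have := E k j; by rewrite !mxE.
Qed.

Lemma coordB m s (c d : 'rV[Selt R m]_s) : coord_mx (c - d) = coord_mx c - coord_mx d.
Proof. by apply/matrixP => i j; rewrite !mxE. Qed.

Lemma coord_submxrow m l (ns : 'I_l -> nat) (c : 'rV[Selt R m]_(\sum_i ns i)) i :
  coord_mx (submxrow c i) = submxrow (coord_mx c) i.
Proof. by apply/matrixP => a b; rewrite !mxE. Qed.

Lemma rowv_neq0 m (v : 'rV[R]_m) : (v != 0) = [exists i, v 0 i != 0].
Proof.
apply/idP/idP => [nz|/existsP[i nz]].
  apply: contraT; rewrite negb_exists => /forallP H.
  have E : v = 0 by apply/rowP => i; have := H i; rewrite negbK mxE => /eqP.
  by rewrite E eqxx in nz.
by apply: contraNneq nz => ->; rewrite mxE.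
Qed.

Lemma wtH_ncols m n (c : 'rV[Selt R m]_n) : wt_H c = ncols (coord_mx c).
Proof.
rewrite /wt_H /ncols; apply: eq_card => j; rewrite !inE rowv_neq0.
by apply: eq_existsb => i; rewrite mxE.
Qed.

Lemma wtSR_E m l (ns : 'I_l -> nat) (c : 'rV[Selt R m]_(\sum_i ns i)) :
  wt_SR c = (\sum_i snf_rank (submxrow (coord_mx c) i))%N.
Proof. by apply: eq_bigr => i _; rewrite /rk coord_submxrow. Qed.

Lemma wtH_act m l (ns : 'I_l -> nat) (c : 'rV[Selt R m]_(\sum_i ns i))
   (A : forall i, 'M[R]_(ns i)) :
  wt_H (act_mx c (mxdiag A)) = (\sum_i ncols (submxrow (coord_mx c) i *m A i))%N.
Proof.
rewrite wtH_ncols coord_actE ncols_sum; apply: eq_bigr => i _.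
by rewrite submxrow_mul_diag.
Qed.

Lemma H1 m l (ns : 'I_l -> nat) (c : 'rV[Selt R m]_(\sum_i ns i))
   (A : forall i, 'M[R]_(ns i)) : (forall i, A i \in unitmx) ->
  (wt_SR c <= wt_H (act_mx c (mxdiag A)))%N.
Proof.
move=> uA; rewrite wtSR_E wtH_act; apply: leq_sum => i _; exact: rank_K1.
Qed.

Lemma H0 m l (ns : 'I_l -> nat) (c : 'rV[Selt R m]_(\sum_i ns i)) :
  (wt_SR c <= wt_H c)%N.
Proof.
rewrite wtSR_E wtH_ncols ncols_sum; apply: leq_sum => i _.
have := rank_K1 (submxrow (coord_mx c) i) (unitmx1 _ _); by rewrite mulmx1.
Qed.

Lemma H2 m l (ns : 'I_l -> nat) (c : 'rV[Selt R m]_(\sum_i ns i)) :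
  exists A : forall i, 'M[R]_(ns i), (forall i, A i \in unitmx) /\
  (wt_H (act_mx c (mxdiag A)) <= wt_SR c)%N.
Proof.
pose P i (A : 'M[R]_(ns i)) := (A \in unitmx) &&
   (ncols (submxrow (coord_mx c) i *m A) <= snf_rank (submxrow (coord_mx c) i))%N.
have HP : forall i, P i (odflt 1%:M [pick A | P i A]).
  move=> i; case: pickP => [A //|H] /=.
  have [A [uA le]] := rank_K2 (submxrow (coord_mx c) i).
  by have := H A; rewrite /P uA le.
exists (fun i => odflt 1%:M [pick A | P i A]); split.
  by move=> i; have /andP[] := HP i.
rewrite wtSR_E wtH_act; apply: leq_sum => i _; by have /andP[] := HP i.
Qed.

Lemma act_inj m l (ns : 'I_l -> nat) (A : forall i, 'M[R]_(ns i)) :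
  (forall i, A i \in unitmx) ->
  injective (fun c : 'rV[Selt R m]_(\sum_i ns i) => act_mx c (mxdiag A)).
Proof.
move=> uA c d /= /(congr1 (@coord_mx R m _)); rewrite !coord_actE => E.
apply: coord_inj; apply/mxrowP => i.
have := congr1 (fun X => submxrow X i *m invmx (A i)) E.
by rewrite /= !submxrow_mul_diag !mulmxK.
Qed.

Lemma act_subr m s (c d : 'rV[Selt R m]_s) A :
  act_mx (c - d) A = act_mx c A - act_mx d A.
Proof. by apply: coord_inj; rewrite coordB !coord_actE coordB mulmxBl. Qed.


Lemma rowV_neq0 (V : nmodType) n (v : 'rV[V]_n) : v != 0 -> exists j, v 0 j != 0.
Proof.
move=> nz; apply/existsP; apply: contraT; rewrite negb_exists => /forallP H.
have E : v = 0 by apply/rowP => i; have := H i; rewrite negbK mxE => /eqP.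
by rewrite E eqxx in nz.
Qed.

Lemma bigmin_le (I : finType) (P : pred I) (F : I -> nat) x0 i0 :
  P i0 -> (\big[minn/x0]_(i | P i) F i <= F i0)%N.
Proof.
move=> Pi0; have : i0 \in index_enum I by rewrite mem_index_enum.
elim: (index_enum I) => // a r IH; rewrite inE big_cons => /orP[/eqP Ei|/IH h].
  by rewrite -Ei Pi0 geq_minl.
by case: (P a) => //; rewrite (leq_trans (geq_minr _ _) h).
Qed.

Lemma bigmin_ge (I : finType) (P : pred I) (F : I -> nat) x0 b :
  (b <= x0)%N -> (forall i, P i -> b <= F i)%N -> (b <= \big[minn/x0]_(i | P i) F i)%N.
Proof.
move=> h0 h; apply: (big_ind (fun x => b <= x)%N) => //.
by move=> x y hx hy; rewrite leq_min hx hy.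
Qed.

Lemma bigmin_mono (I : finType) (P : pred I) (F G : I -> nat) x0 :
  (forall i, P i -> F i <= G i)%N ->
  (\big[minn/x0]_(i | P i) F i <= \big[minn/x0]_(i | P i) G i)%N.
Proof.
move=> h; apply: (big_ind2 (fun x y => x <= y)%N) => //.
move=> x1 x2 y1 y2 hx hy; rewrite leq_min.
by rewrite (leq_trans (geq_minl _ _) hx) (leq_trans (geq_minr _ _) hy).
Qed.

Lemma md_le m n (wt : 'rV[Selt R m]_n -> nat) (C : {set 'rV[Selt R m]_n}) c d :
  c \in C -> d \in C -> d != c -> (min_dist wt C <= wt (c - d)%R)%N.
Proof.
move=> cC dC dc; rewrite /min_dist.
apply: leq_trans (@bigmin_le _ _ _ _ c cC) _.
by apply: (@bigmin_le _ _ _ _ d); rewrite dC dc.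
Qed.

Lemma md_ge m n (wt : 'rV[Selt R m]_n -> nat) (C : {set 'rV[Selt R m]_n}) b :
  (b <= n.+1)%N -> (forall c d, c \in C -> d \in C -> d != c -> b <= wt (c - d)%R)%N ->
  (b <= min_dist wt C)%N.
Proof.
move=> hb h; apply: bigmin_ge => // c cC; apply: bigmin_ge => // d /andP[dC dc].
exact: h.
Qed.

Lemma md_mono m n (wt1 wt2 : 'rV[Selt R m]_n -> nat) (C : {set 'rV[Selt R m]_n}) :
  (forall x, wt1 x <= wt2 x)%N -> (min_dist wt1 C <= min_dist wt2 C)%N.
Proof.
by move=> h; apply: bigmin_mono => c _; apply: bigmin_mono => d _.
Qed.


Lemma wtH_le m n (c : 'rV[Selt R m]_n) : (wt_H c <= n)%N.
Proof. by rewrite /wt_H; apply: leq_trans (max_card _) _; rewrite card_ord. Qed.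

Lemma SB m n (D : {set 'rV[Selt R m]_n}) k' :
  (1 < #|D|)%N -> #|D| = (#|{: Selt R m}| ^ k')%N -> (1 < #|{: Selt R m}|)%N ->
  (d_H D + k' <= n.+1)%N.
Proof.
move=> D2 hD q1.
have [x [y [xD yD xy]]] := card_gt1P D2.
have dn : (d_H D <= n)%N.
  apply: leq_trans (wtH_le (y - x)); apply: md_le => //.
have d1 : (1 <= d_H D)%N.
  apply: md_ge => // c e cC eC ec.
  have [j nz] : exists j, (c - e) 0 j != 0 by apply: rowV_neq0; rewrite subr_eq0 eq_sym.
  by rewrite /wt_H card_gt0; apply/set0Pn; exists j; rewrite inE.
set d := d_H D in dn d1 *.
have tn : (n.+1 - d <= n)%N by lia.
set t := (n.+1 - d)%N in tn *.
pose f (z : 'rV[Selt R m]_n) : {ffun 'I_t -> Selt R m} := [ffun j => z 0 (widen_ord tn j)].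
have finj : {in D &, injective f}.
  move=> u v uD vD E; apply/eqP; apply: contraT => nuv.
  have vu : v != u by rewrite eq_sym.
  have := @md_le m n (@wt_H R m n) D u v uD vD vu; rewrite -/d => hd.
  pose W := [set widen_ord tn j | j : 'I_t].
  have cW : #|W| = t.
    rewrite card_imset ?card_ord //.
    by move=> a b /(congr1 val) /= /val_inj.
  have sub : [set j | (u - v) 0 j != 0] \subset ~: W.
    apply/subsetP => j; rewrite !inE; apply: contra => /imsetP[j' _ ->].
    have := congr1 (fun g : {ffun 'I_t -> Selt R m} => g j') E; rewrite /f !ffunE => Euv.
    by rewrite !mxE Euv subrr.
  have := subset_leq_card sub; rewrite -/(wt_H (u - v)).
  have := cardsC W; rewrite cW card_ord => hc.
  have hd2 : (d <= wt_H (u - v))%N := hd; have et : t = (n.+1 - d)%N by []; lia.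
have := card_in_imset finj; rewrite hD => hc.
have : (#|{: Selt R m}| ^ k' <= #|{: Selt R m}| ^ t)%N.
  rewrite -hc (_ : (#|{: Selt R m}| ^ t)%N = #|{: {ffun 'I_t -> Selt R m}}|); [exact: max_card| by rewrite card_ffun card_ord].
rewrite leq_exp2l // => hk.
lia.
Qed.


Lemma cardS_gt1 m : (0 < m)%N -> (1 < #|{: Selt R m}|)%N.
Proof.
move=> m0; apply/card_gt1P; exists (0 : 'rV[R]_m), (const_mx 1 : 'rV[R]_m).
split => //; apply/eqP => /rowP /(_ (Ordinal m0)); rewrite !mxE => /eqP.
by rewrite eq_sym oner_eq0.
Qed.

End SNF.

Unset Implicit Arguments. Set Strict Implicit.

Theorem lemma3 (R : finComUnitRingType) (h : {poly R})
  (chainR : chain_ring R) (h_monic : h \is monic)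
  (h_irr : irreducible_mod_max h)
  (l : nat) (ns : 'I_l -> nat)
  (C : {set 'rV[Selt R (size h).-1]_(\sum_i ns i)}) (k : nat)
  (k_pos : (0 < k)%N) (hC : #|C| = (#|{: Selt R (size h).-1}| ^ k)%N) :
  MSRD C <->
  (forall A : forall i : 'I_l, 'M[R]_(ns i),
     (forall i, A i \in unitmx) -> MDS (code_diag C A)).
Proof.
have m0 : (0 < (size h).-1)%N by case: h_irr => hs _; lia.
have q1 := @cardS_gt1 R _ m0.
move: C hC; set m := (size h).-1 => C hC.
have C2 : (1 < #|C|)%N.
  rewrite hC; apply: (leq_trans q1); rewrite -{1}(expn1 #|{: Selt R m}|) leq_exp2l //.
have cardCA : forall A : forall i, 'M[R]_(ns i), (forall i, A i \in unitmx) ->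
    #|code_diag C A| = #|C|.
  by move=> A uA; rewrite card_imset //; apply: act_inj.
split.
- move=> [k0 [k0pos [hC0 hd]]].
  have ek : k0 = k by apply/eqP; rewrite -(eqn_exp2l _ _ q1) -hC0 hC.
  subst k0 => A uA; exists k; split; first by rewrite cardCA.
  have C2A : (1 < #|code_diag C A|)%N by rewrite cardCA.
  have sb := SB C2A (etrans (cardCA A uA) hC) q1.
  have ge : (d_SR C <= d_H (code_diag C A))%N.
    apply: md_ge; first by lia.
    move=> x y /imsetP[c cC ->] /imsetP[d dC ->] yx.
    have dc : d != c by apply: contra yx => /eqP ->.
    rewrite -act_subr; apply: leq_trans (H1 chainR _ uA).
    exact: md_le.
  lia.
- move=> HA; exists k; split => //; split => //.
  have up : (d_SR C <= d_H C)%N by apply: md_mono => x; exact: (H0 chainR x).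
  have sb := SB C2 hC q1.
  have lo : ((\sum_i ns i).+1 - k <= d_SR C)%N.
    apply: md_ge; first by lia.
    move=> c d cC dC dc.
    have [A [uA hA]] := H2 chainR (c - d).
    have [k0 [hk0 hd0]] := HA A uA.
    have ek : k0 = k.
      by apply/eqP; rewrite -(eqn_exp2l _ _ q1) -hk0 cardCA // hC.
    subst k0.
    apply: leq_trans hA; rewrite act_subr.
    have : (d_H (code_diag C A) <= wt_H (act_mx c (mxdiag A) - act_mx d (mxdiag A)))%N.
      have cA : act_mx c (mxdiag A) \in code_diag C A by apply/imsetP; exists c.
      have dA : act_mx d (mxdiag A) \in code_diag C A by apply/imsetP; exists d.
      have ne : act_mx d (mxdiag A) != act_mx c (mxdiag A).
        apply/negP => /eqP E; have E2 := act_inj uA E; by rewrite E2 eqxx in dc.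
      exact: md_le cA dA ne.
    lia.
  lia.
Qed.
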